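(* Let $n=2k+1$ with $k$ a positive integer, and let $(\Gamma,+)$ be an abelian group of order $n$ with neutral element $e$ such that $\sum_{g\in\Gamma} g = e$ and $2g\neq e$ for all $g\in\Gamma\setminus\{e\}$. Let $p,q$ be two new symbols and let $P_n=(\Gamma\times(\Gamma\setminus\{e\}))\cup\{p,q\}$. Define the lines - $L_g=\{(h,g): h\in\Gamma\}$ for $g\in\Gamma\setminus\{e\}$; - $l_{p_g}=\{(g,h): h\in\Gamma\setminus\{e\}\}\cup\{p\}$ for $g\in\Gamma$; - $l_{q_g}=\{(h,h+g): h\in\Gamma,\ h+g\neq e\}\cup\{q\}$ for $g\in\Gamma$, and let $\mathcal{L}_n$ be the family of all these $3n-1$ lines. Then the linear system $\mathcal{C}_{n,n+1}=(P_n,\mathcal{L}_n)$ satisfies $\tau(\mathcal{C}_{n,n+1})=n+1$.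
   Context: A linear system is a pair $(P,\mathcal{L})$ with $P$ a finite set of points and $\mathcal{L}$ a family of subsets of $P$ (lines) such that any two distinct lines share at most one point. A transversal is a set of points meeting every line; $\tau$ denotes the minimum cardinality of a transversal. *)

(* Defs.v *)
From HB Require Import structures.
From mathcomp Require Import all_boot all_order all_algebra.
Set Implicit Arguments. Unset Strict Implicit. Unset Printing Implicit Defensive.
Import GRing.Theory.
Local Open Scope ring_scope.

Definition is_transversal (X : finType) (P : {set X}) (L : {set {set X}})
  (T : {set X}) : bool :=
  (T \subset P) && [forall l in L, T :&: l != set0].

Definition tau (X : finType) (P : {set X}) (L : {set {set X}}) : nat :=
  \big[minn/#|P|.+1]_(T : {set X} | is_transversal P L T) #|T|.

(* The construction C_{n,n+1}.  Points live in (Gamma * Gamma) + bool: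
   inl (h, g) is the pair (h,g); inr false is p, inr true is q. *)
Section Construction.
Variable G : finZmodType.
Definition cpt := ((G * G) + bool)%type.
Definition pp : cpt := inr false.
Definition qq : cpt := inr true.

Definition Pn : {set cpt} :=
  [set x : cpt | if x is inl hg then hg.2 != 0 else true].

Definition Lg (g : G) : {set cpt} := [set inl (h, g) | h : G].
Definition lp (g : G) : {set cpt} :=
  pp |: [set inl (g, h) | h in [set h : G | h != 0]].
Definition lq (g : G) : {set cpt} :=
  qq |: [set inl (h, h + g) | h in [set h : G | h + g != 0]].

Definition Ln : {set {set cpt}} :=
  [set Lg g | g in [set g : G | g != 0]] :|: [set lp g | g : G]
    :|: [set lq g | g : G].
End Construction.

(* Main.v *)
Require Import Defs.
From mathcomp Require Import all_boot all_order all_algebra.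
From mathcomp Require Import zify.
Import GRing.Theory.
Local Open Scope ring_scope.
Set Implicit Arguments. Unset Strict Implicit.

Section Aux.
Variable G : finZmodType.

Lemma meet_line (P : {set cpt G}) (L : {set {set cpt G}}) T l :
  Defs.is_transversal P L T -> l \in L -> exists2 x, x \in T & x \in l.
Proof.
rewrite /Defs.is_transversal => /andP[_ /forallP H] hl; have := H l; rewrite hl /= => /set0Pn [x].
by rewrite inE => /andP[]; exists x.
Qed.

Lemma col_meet T g : Defs.is_transversal (Pn G) (Ln G) T -> g != 0 ->
  exists h, inl (h, g) \in T.
Proof.
move=> hT hg; have hl : Lg g \in Ln G.
  by apply/setUP; left; apply/setUP; left; apply/imsetP; exists g; rewrite ?inE.
case: (meet_line hT hl) => x xT.
by case/imsetP => h _ e; subst x; exists h.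
Qed.

Lemma row_meet T g : Defs.is_transversal (Pn G) (Ln G) T -> (@pp G) \notin T ->
  exists h, inl (g, h) \in T.
Proof.
move=> hT hp; have hl : lp g \in Ln G.
  by apply/setUP; left; apply/setUP; right; apply/imsetP; exists g.
case: (meet_line hT hl) => x xT.
case/setU1P => [e|]; first by subst x; rewrite xT in hp.
by case/imsetP => h _ e; subst x; exists h.
Qed.

Lemma diag_meet T g : Defs.is_transversal (Pn G) (Ln G) T -> (@qq G) \notin T ->
  exists h, inl (h, h + g) \in T.
Proof.
move=> hT hp; have hl : lq g \in Ln G.
  by apply/setUP; right; apply/imsetP; exists g.
case: (meet_line hT hl) => x xT.
case/setU1P => [e|]; first by subst x; rewrite xT in hp.
by case/imsetP => h _ e; subst x; exists h.
Qed.

Lemma card_split (T S : {set cpt G}) (A : {set G * G}) :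
  (forall x, x \in A -> inl x \in T) ->
  S \subset [set (@pp G); (@qq G)] -> S \subset T -> (#|A| + #|S| <= #|T|)%N.
Proof.
move=> hA hS1 hS2.
have inj : injective (@inl (G * G) bool) by move=> a b [].
have sub : inl @: A :|: S \subset T.
  rewrite subUset hS2 andbT; apply/subsetP => x /imsetP [y yA ->]; exact: hA.
have disj : inl @: A :&: S = set0.
  apply/setP => x; rewrite inE in_set0; apply/negP => /andP[/imsetP [y _ ->]].
  by move/(subsetP hS1); rewrite !inE.
rewrite -(card_imset A inj) -cardsUI disj cards0 addn0.
exact: subset_leq_card.
Qed.

Lemma cover_card (A : {set G * G}) (D : {set G}) (f : G * G -> G) :
  (forall d, d \in D -> exists2 x, x \in A & f x = d) -> (#|D| <= #|A|)%N.
Proof.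
move=> H; apply: leq_trans (leq_imset_card f A); apply: subset_leq_card.
by apply/subsetP => d /H [x xA <-]; apply: imset_f.
Qed.

End Aux.
Lemma bigmin_le (I : finType) (P : pred I) (F : I -> nat) x0 i0 :
  P i0 -> (\big[minn/x0]_(i | P i) F i <= F i0)%N.
Proof.
move=> hP; rewrite unlock.
elim: (index_enum I) (mem_index_enum i0) => //= j r IH.
rewrite inE => /predU1P [<-|/IH]; first by rewrite hP geq_minl.
by move=> h; case: (P j) => //; apply: leq_trans (geq_minr _ _) h.
Qed.
Unset Implicit Arguments.

Theorem proposition3p1 (G : finZmodType) (k : nat) :
  (0 < k)%N ->
  #|G| = (2 * k).+1 ->
  \sum_(g : G) g = 0 ->
  (forall g : G, g != 0 -> g *+ 2 != 0) ->
  tau (Pn G) (Ln G) = #|G|.+1.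
Proof.
move=> _ _ hsum _.
set n := #|G|.
set nz := [set h : G | h != 0].
have cnz : #|nz| = n.-1.
  rewrite -(cardsC1 (0 : G)); apply: eq_card => x; rewrite !inE //.
have snz : \sum_(g in nz) g = 0.
  by apply: etrans hsum; rewrite [RHS](bigD1 0) //= add0r; apply: eq_bigl => x; rewrite inE.
have n0 : (0 < n)%N by apply/card_gt0P; exists 0.
have lower : forall T, Defs.is_transversal (Pn G) (Ln G) T -> (n.+1 <= #|T|)%N.
  move=> T hT.
  set A := [set x : G * G | inl x \in T].
  have hA : forall x, x \in A -> inl x \in T by move=> x; rewrite inE.
  have hA2 : forall x, x \in A -> x.2 != 0.
    move=> [a b] /hA /(subsetP (proj1 (andP hT))); by rewrite inE.
  have colc : (n.-1 <= #|A|)%N.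
    rewrite -cnz; apply: (cover_card (f := snd)) => g; rewrite inE => /(col_meet hT) [h hh].
    by exists (h, g); rewrite ?inE.
  have rowc : (@pp G) \notin T -> (n <= #|A|)%N.
    move=> hp; rewrite /n -cardsT; apply: (cover_card (f := fst)) => g _.
    have [h hh] := row_meet g hT hp; by exists (g, h); rewrite ?inE.
  have diagc : (@qq G) \notin T -> (n <= #|A|)%N.
    move=> hq; rewrite /n -cardsT; apply: (cover_card (f := fun x => x.2 - x.1)) => g _.
    have [h hh] := diag_meet g hT hq; exists (h, h + g); rewrite ?inE //=.
    by rewrite addrC addKr.
  case hp : ((@pp G) \in T); case hq : ((@qq G) \in T).
  - have := card_split hA (subxx [set (@pp G); (@qq G)]) (_ : [set (@pp G); (@qq G)] \subset T).
    rewrite cards2 /=; move=> H; apply: leq_trans (H _); last first.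
      by apply/subsetP => x; rewrite !inE => /orP[] /eqP ->.
    by rewrite addn2; move: colc n0; case: (n) => // m.
  - have := card_split hA (_ : [set (@pp G)] \subset [set (@pp G); (@qq G)]) (_ : [set (@pp G)] \subset T).
    rewrite cards1 addn1; move=> H; apply: leq_trans (H _ _).
    + by rewrite ltnS diagc ?hq.
    + by rewrite sub1set !inE eqxx.
    + by rewrite sub1set hp.
  - have := card_split hA (_ : [set (@qq G)] \subset [set (@pp G); (@qq G)]) (_ : [set (@qq G)] \subset T).
    rewrite cards1 addn1; move=> H; apply: leq_trans (H _ _).
    + by rewrite ltnS rowc ?hp.
    + by rewrite sub1set !inE eqxx orbT.
    + by rewrite sub1set hq.
  - have := card_split hA (sub0set [set (@pp G); (@qq G)]) (sub0set T).
    rewrite cards0 addn0 => H; apply: leq_trans H.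
    rewrite ltnNge; apply/negP => hle.
    have cA : #|A| = n by apply/eqP; rewrite eqn_leq hle rowc ?hp.
    have fstT : fst @: A = setT.
      apply/eqP; rewrite eqEsubset subsetT /=; apply/subsetP => g _.
      have [h hh] := row_meet g hT (negbT hp); by apply/imsetP; exists (g, h); rewrite ?inE.
    have fstI : {in A &, injective fst}.
      by apply/imset_injP; rewrite fstT cardsT cA.
    have dT : (fun x : G * G => x.2 - x.1) @: A = setT.
      apply/eqP; rewrite eqEsubset subsetT /=; apply/subsetP => g _.
      have [h hh] := diag_meet g hT (negbT hq); apply/imsetP; exists (h, h + g); rewrite ?inE //=.
      by rewrite addrC addKr.
    have dI : {in A &, injective (fun x : G * G => x.2 - x.1)}.
      by apply/imset_injP; rewrite dT cardsT cA.
    have s1 : \sum_(x in A) x.1 = 0.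
      have e : \sum_(j in fst @: A) j = \sum_(x in A) x.1 by rewrite big_imset.
      by rewrite -e fstT; apply: etrans hsum; apply: eq_bigl => x; rewrite inE.
    have s2 : \sum_(x in A) (x.2 - x.1) = 0.
      have e : \sum_(j in (fun x : G * G => x.2 - x.1) @: A) j = \sum_(x in A) (x.2 - x.1) by rewrite big_imset.
      by rewrite -e dT; apply: etrans hsum; apply: eq_bigl => x; rewrite inE.
    have s3 : \sum_(x in A) x.2 = 0.
      by move: s2; rewrite sumrB s1 subr0.
    have sndA : snd @: A = nz.
      apply/eqP; rewrite eqEsubset; apply/andP; split; apply/subsetP => g.
        by case/imsetP => x xA ->; rewrite inE hA2.
      rewrite inE => /(col_meet hT) [h hh]; apply/imsetP; exists (h, g); rewrite ?inE //.
    have ninj : ~~ dinjectiveb snd A.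
      apply/negP => /dinjectiveP /imset_injP /eqP; rewrite sndA cnz cA => e.
      by move: e n0; case: (n) => // m /= e _; lia.
    case/dinjectivePn: ninj => x xA [y] /andP [yx yA] exy.
    have sub' : snd @: (A :\ x) = nz.
      apply/eqP; rewrite eqEsubset; apply/andP; split; apply/subsetP => g.
        by case/imsetP => z /setD1P [_ zA] ->; rewrite inE hA2.
      rewrite -sndA => /imsetP [z zA ->]; apply/imsetP.
      case: (eqVneq z x) => [->|zx]; first by exists y => //; rewrite in_setD1 yx yA.
      by exists z; rewrite // in_setD1 zx zA.
    have I' : {in A :\ x &, injective snd}.
      apply/imset_injP; rewrite sub' cnz.
      by have := cardsD1 x A; rewrite xA cA => ->; rewrite add1n.
    have e3 : \sum_(j in snd @: (A :\ x)) j = \sum_(i in A :\ x) i.2 by rewrite big_imset.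
    move: s3; rewrite (big_setD1 x xA) -e3 sub' snz /= addr0.
    by move/eqP; rewrite (negbTE (hA2 x xA)).
set T0 := [set (@pp G); (@qq G)] :|: [set inl (0, g) | g in nz].
have T0t : Defs.is_transversal (Pn G) (Ln G) T0.
  rewrite /Defs.is_transversal; apply/andP; split.
    apply/subsetP => x; rewrite /Pn !inE => /orP[/orP[]/eqP -> //|].
    by case/imsetP => g; rewrite inE => hg ->.
  apply/forallP => l; apply/implyP => /setUP [/setUP [] |] /imsetP [g hg ->];
    apply/set0Pn.
  - exists (inl (0, g)); rewrite !inE; apply/andP; split.
      by apply/orP; right; apply/imsetP; exists g.
    by apply/imsetP; exists 0.
  - by exists (@pp G); rewrite !inE eqxx.
  - by exists (@qq G); rewrite !inE eqxx ?orbT.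
have cT0 : (#|T0| <= n.+1)%N.
  apply: leq_trans (leq_card_setU _ _) _.
  rewrite cards2 /= add2n; apply: leq_trans (_ : (2 + n.-1 <= _)%N); last first.
    by case: (n) n0.
  by rewrite add2n !ltnS -cnz leq_imset_card.
apply/eqP; rewrite eqn_leq; apply/andP; split.
  rewrite /tau; apply: leq_trans (@bigmin_le _ (Defs.is_transversal (Pn G) (Ln G)) (fun T : {set cpt G} => #|T|) _ _ T0t) cT0.
rewrite /tau; apply: (big_ind (fun m => n.+1 <= m)%N).
- apply: leq_trans (lower _ T0t) _; apply: leq_trans (leqnSn _).
  by apply: subset_leq_card; case/andP: T0t.
- by move=> a b ha hb; rewrite leq_min ha hb.
- exact: lower.
Qed.
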